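(* Let $\alpha,\beta$ be real numbers with $0<\alpha<2$ and $0<\beta<2$. There exist constants $c,C>0$ and $N$, independent of $n$, such that for every natural number $n>N$ there is a set $P\subset[0,1]^2$ of $n$ points with $$c\,n^2\le |\Pi_{\alpha,\beta}(P)|\le C\,n^2 .$$
   Context: For a finite set $P\subset\mathbb R^2$ and real numbers $\alpha,\beta$, define the set of ordered triples $$\Pi_{\alpha,\beta}(P)=\{(p,q,r)\in P\times P\times P:\ p\cdot q=\alpha \text{ and } p\cdot r=\beta\},$$ where $\cdot$ is the standard dot product on $\mathbb R^2$ (the points $p,q,r$ need not be distinct). *)

(* Defs.v *)
From Stdlib Require Import Reals List.
Import ListNotations.
Open Scope R_scope.

Definition dot (p q : R * R) : R := fst p * fst q + snd p * snd q.

Definition Reqb (x y : R) : bool := if Req_EM_T x y then true else false.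

Definition triples (P : list (R * R)) : list ((R * R) * ((R * R) * (R * R))) :=
  list_prod P (list_prod P P).

(* |Pi_{alpha,beta}(P)| : number of ordered triples (p,q,r) in P^3 with
   p.q = alpha and p.r = beta.  (P is assumed duplicate-free when used.) *)
Definition Pi_card (alpha beta : R) (P : list (R * R)) : nat :=
  length (filter (fun t : (R * R) * ((R * R) * (R * R)) =>
                    let '(p, (q, r)) := t in
                    andb (Reqb (dot p q) alpha) (Reqb (dot p r) beta))
                 (triples P)).

Definition in_unit_square (p : R * R) : Prop :=
  0 <= fst p <= 1 /\ 0 <= snd p <= 1.

(* Main.v *)
Require Import Defs.
From Stdlib Require Import Reals List Lia Lra.
Import ListNotations.
Open Scope R_scope.

Definition cnt (g : R*R -> bool) (l : list (R*R)) : nat := length (filter g l).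
Definition eqc (p : R*R) (c : R) := fun q => Reqb (dot p q) c.
Definition sumf (f : R*R -> nat) (l : list (R*R)) : nat :=
  fold_right (fun p acc => (f p + acc)%nat) 0%nat l.

Lemma Reqb_true x y : Reqb x y = true <-> x = y.
Proof. unfold Reqb; destruct (Req_EM_T x y); split; congruence. Qed.

Lemma filter_map_len {A B} (f : B -> bool) (h : A -> B) (l : list A) :
  length (filter f (map h l)) = length (filter (fun x => f (h x)) l).
Proof. induction l; simpl; auto. destruct (f (h a)); simpl; auto. Qed.

Lemma inner_prod (g h : R*R -> bool) (B1 B2 : list (R*R)) :
  length (filter (fun t : (R*R)*(R*R) => let '(q, r) := t in andb (g q) (h r))
    (list_prod B1 B2)) = (cnt g B1 * cnt h B2)%nat.
Proof.
  induction B1 as [|b B1 IH]; simpl; auto.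
  rewrite filter_app, length_app, IH, filter_map_len. unfold cnt; simpl.
  destruct (g b); simpl; auto.
  assert (Z : forall l : list (R*R), length (filter (fun _ => false) l) = 0%nat)
    by (induction l; simpl; auto).
  rewrite Z; reflexivity.
Qed.

Lemma Pi_sum_gen alpha beta A B :
  length (filter (fun t : (R * R) * ((R * R) * (R * R)) =>
                    let '(p, (q, r)) := t in
                    andb (Reqb (dot p q) alpha) (Reqb (dot p r) beta))
                 (list_prod A (list_prod B B)))
  = sumf (fun p => (cnt (eqc p alpha) B * cnt (eqc p beta) B)%nat) A.
Proof.
  induction A as [|a A IH]; simpl; auto.
  rewrite filter_app, length_app, IH, filter_map_len. f_equal.
  apply (inner_prod (eqc a alpha) (eqc a beta)).
Qed.

Lemma Pi_sum alpha beta P :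
  Pi_card alpha beta P = sumf (fun p => (cnt (eqc p alpha) P * cnt (eqc p beta) P)%nat) P.
Proof. apply Pi_sum_gen. Qed.

Lemma cnt_le g l : (cnt g l <= length l)%nat.
Proof. unfold cnt; induction l; simpl; auto; destruct (g a); simpl; lia. Qed.

Lemma cnt_app g l1 l2 : cnt g (l1 ++ l2) = (cnt g l1 + cnt g l2)%nat.
Proof. unfold cnt; now rewrite filter_app, length_app. Qed.

Lemma cnt_all g l : (forall x, In x l -> g x = true) -> cnt g l = length l.
Proof. unfold cnt; induction l; simpl; intros H; auto. rewrite H; auto. simpl; f_equal; auto. Qed.

Lemma cnt_uniq g l : NoDup l ->
  (forall x y, In x l -> In y l -> g x = true -> g y = true -> x = y) -> (cnt g l <= 1)%nat.
Proof.
  unfold cnt; induction l as [|a l IH]; simpl; intros Hn H; auto.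
  inversion Hn; subst. destruct (g a) eqn:Ga.
  - simpl. destruct (filter g l) as [|r rs] eqn:F; simpl; auto.
    exfalso. assert (Hr : In r (filter g l)) by (rewrite F; simpl; auto).
    apply filter_In in Hr as [Hr1 Hr2]. assert (a = r) by (apply H; auto).
    subst; auto.
  - apply IH; auto.
Qed.

Lemma sumf_le f l K : (forall x, In x l -> (f x <= K)%nat) -> (sumf f l <= length l * K)%nat.
Proof. induction l; simpl; intros H; auto. 
  assert (sumf f l <= length l * K)%nat by auto.
  specialize (H a (or_introl eq_refl)). unfold sumf in *; simpl. lia. Qed.

Lemma nodup_map_seq (f : nat -> R*R) m :
  (forall i j, f i = f j -> i = j) -> NoDup (map f (seq 0 m)).
Proof.
  intros Hf. generalize 0%nat. induction m; intros s; simpl; constructor; auto.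
  intros Hin. apply in_map_iff in Hin as [j [E Hj]]. apply Hf in E. subst.
  apply in_seq in Hj. lia.
Qed.

(* points on the line x+y=s with px <> py: dot equation determines the point *)
Definition lpt (s a : R) : R*R := (a, s - a).

Lemma line_uniq (p : R*R) s c (f : nat -> R) m :
  fst p <> snd p -> (forall i j, f i = f j -> i = j) ->
  (cnt (eqc p c) (map (fun k => lpt s (f k)) (seq 0 m)) <= 1)%nat.
Proof.
  intros Hp Hf. apply cnt_uniq.
  - apply nodup_map_seq. intros i j E. apply Hf. unfold lpt in E. congruence.
  - intros x y Hx Hy Gx Gy. apply in_map_iff in Hx as [i [<- _]].
    apply in_map_iff in Hy as [j [<- _]]. unfold eqc in *.
    apply Reqb_true in Gx, Gy. unfold dot, lpt in *; simpl in *.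
    destruct p as [px py]; simpl in *.
    assert ((px - py) * (f i - f j) = 0) by lra.
    apply Rmult_integral in H as [H|H]; [exfalso; lra|].
    replace (f i) with (f j) by lra. auto.
Qed.

Theorem proposition1 (alpha beta : R)
  (Halpha : 0 < alpha < 2) (Hbeta : 0 < beta < 2) :
  exists (c C : R) (N : nat), 0 < c /\ 0 < C /\
    forall n : nat, (N < n)%nat ->
      exists P : list (R * R),
        NoDup P /\ length P = n /\
        (forall p, In p P -> in_unit_square p) /\
        c * (INR n) ^ 2 <= INR (Pi_card alpha beta P) <= C * (INR n) ^ 2.
Proof.
  exists (1/18), 4, 2%nat. split; [lra|]. split; [lra|].
  intros n Hn.
  assert (exists m k, n = (1+m+k)%nat /\ (n <= 6*m)%nat /\ (n <= 3*k)%nat) as [m [k [En [Hm Hk]]]].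
  { exists ((n-1)/2)%nat, (n-1-(n-1)/2)%nat. pose proof (Nat.div_mod (n-1) 2).
    pose proof (Nat.mod_upper_bound (n-1) 2). lia. }
  set (ha := Rmin (alpha/2) (1 - alpha/2)).
  set (hb := Rmin (beta/2) (1 - beta/2)).
  assert (Ha1 : 0 < ha) by (unfold ha; apply Rmin_glb_lt; lra).
  assert (Ha2 : ha <= alpha/2) by apply Rmin_l.
  assert (Ha3 : ha <= 1 - alpha/2) by apply Rmin_r.
  assert (Hb1 : 0 < hb) by (unfold hb; apply Rmin_glb_lt; lra).
  assert (Hb2 : hb <= beta/2) by apply Rmin_l.
  assert (Hb3 : hb <= 1 - beta/2) by apply Rmin_r.
  set (D := INR n + 1).
  assert (HD : 0 < D) by (unfold D; pose proof (pos_INR n); lra).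
  set (fa := fun k : nat => alpha/2 - ha * (INR k + 1) / D).
  set (fb := fun k : nat => beta/2 + hb * (INR k + 1) / D).
  assert (fa_inj : forall i j, fa i = fa j -> i = j).
  { intros i j E. unfold fa in E. apply INR_eq.
    assert (ha * (INR i + 1) / D = ha * (INR j + 1) / D) by lra.
    unfold Rdiv in H. apply Rmult_eq_reg_r in H; [|apply Rinv_neq_0_compat; lra].
    apply Rmult_eq_reg_l in H; lra. }
  assert (fb_inj : forall i j, fb i = fb j -> i = j).
  { intros i j E. unfold fb in E. apply INR_eq.
    assert (hb * (INR i + 1) / D = hb * (INR j + 1) / D) by lra.
    unfold Rdiv in H. apply Rmult_eq_reg_r in H; [|apply Rinv_neq_0_compat; lra].
    apply Rmult_eq_reg_l in H; lra. }
  assert (frac : forall k, (k < n)%nat -> 0 < (INR k + 1) / D < 1).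
  { intros kk Hkk. apply lt_INR in Hkk. pose proof (pos_INR kk). split.
    - apply Rdiv_lt_0_compat; lra.
    - apply (Rmult_lt_reg_r D); [lra|]. unfold Rdiv. rewrite Rmult_assoc, Rinv_l; unfold D; lra. }
  assert (fa_rng : forall k, (k < n)%nat -> alpha/2 - ha < fa k < alpha/2).
  { intros kk Hkk. specialize (frac kk Hkk). unfold fa. unfold Rdiv in *.
    rewrite Rmult_assoc. split; nra. }
  assert (fb_rng : forall k, (k < n)%nat -> beta/2 < fb k < beta/2 + hb).
  { intros kk Hkk. specialize (frac kk Hkk). unfold fb. unfold Rdiv in *.
    rewrite Rmult_assoc. split; nra. }
  set (Q := map (fun k => lpt alpha (fa k)) (seq 0 m)).
  set (Rl := map (fun k => lpt beta (fb k)) (seq 0 k)).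
  set (p0 := (1, 1) : R*R).
  assert (inQ : forall q, In q Q -> exists i, (i < n)%nat /\ q = lpt alpha (fa i)).
  { intros q Hq. apply in_map_iff in Hq as [i [<- Hi]]. apply in_seq in Hi.
    exists i; split; auto; lia. }
  assert (inR : forall q, In q Rl -> exists i, (i < n)%nat /\ q = lpt beta (fb i)).
  { intros q Hq. apply in_map_iff in Hq as [i [<- Hi]]. apply in_seq in Hi.
    exists i; split; auto; lia. }
  exists (p0 :: Q ++ Rl). split; [|split; [|split]].
  - constructor.
    + intros H. apply in_app_or in H as [H|H].
      * apply inQ in H as [i [Hi E]]. unfold p0, lpt in E. injection E; intros; lra.
      * apply inR in H as [i [Hi E]]. unfold p0, lpt in E. injection E; intros; lra.
    + apply NoDup_app.
      * apply nodup_map_seq. intros i j E. apply fa_inj. unfold lpt in E. congruence.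
      * apply nodup_map_seq. intros i j E. apply fb_inj. unfold lpt in E. congruence.
      * intros x H1 H2. apply inQ in H1 as [i [Hi ->]]. apply inR in H2 as [j [Hj E]].
        specialize (fa_rng i Hi); specialize (fb_rng j Hj).
        unfold lpt in E. injection E; intros; lra.
  - simpl. rewrite length_app. unfold Q, Rl. rewrite !length_map, !length_seq. lia.
  - intros p [<-|H]; [unfold in_unit_square, p0; simpl; lra|].
    apply in_app_or in H as [H|H].
    + apply inQ in H as [i [Hi ->]]. specialize (fa_rng i Hi).
      unfold in_unit_square, lpt; simpl; lra.
    + apply inR in H as [i [Hi ->]]. specialize (fb_rng i Hi).
      unfold in_unit_square, lpt; simpl; lra.
  - rewrite Pi_sum. set (P := p0 :: Q ++ Rl).
    assert (LP : length P = n) by (unfold P; simpl; rewrite length_app; unfold Q, Rl;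
      rewrite !length_map, !length_seq; lia).
    assert (Hsum : sumf (fun p => (cnt (eqc p alpha) P * cnt (eqc p beta) P)%nat) P
      = (cnt (eqc p0 alpha) P * cnt (eqc p0 beta) P +
         sumf (fun p => (cnt (eqc p alpha) P * cnt (eqc p beta) P)%nat) (Q ++ Rl))%nat)
      by reflexivity.
    rewrite Hsum. split.
    + assert (L1 : (m <= cnt (eqc p0 alpha) P)%nat).
      { unfold P. change (cnt (eqc p0 alpha) (p0 :: Q ++ Rl)) with
          (cnt (eqc p0 alpha) ([p0] ++ (Q ++ Rl))). rewrite !cnt_app.
        rewrite (cnt_all _ Q). unfold Q; rewrite length_map, length_seq; lia.
        intros q Hq. apply inQ in Hq as [i [_ ->]]. apply Reqb_true.
        unfold dot, p0, lpt; simpl; ring. }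
      assert (L2 : (k <= cnt (eqc p0 beta) P)%nat).
      { unfold P. change (cnt (eqc p0 beta) (p0 :: Q ++ Rl)) with
          (cnt (eqc p0 beta) ([p0] ++ (Q ++ Rl))). rewrite !cnt_app.
        rewrite (cnt_all _ Rl). unfold Rl; rewrite length_map, length_seq; lia.
        intros q Hq. apply inR in Hq as [i [_ ->]]. apply Reqb_true.
        unfold dot, p0, lpt; simpl; ring. }
      assert (L3 : (m * k <= cnt (eqc p0 alpha) P * cnt (eqc p0 beta) P +
         sumf (fun p => (cnt (eqc p alpha) P * cnt (eqc p beta) P)%nat) (Q ++ Rl))%nat).
      { pose proof (Nat.mul_le_mono _ _ _ _ L1 L2). lia. }
      apply le_INR in L3. rewrite mult_INR in L3.
      apply le_INR in Hm, Hk. rewrite mult_INR in Hm, Hk. simpl in Hm, Hk.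
      pose proof (pos_INR n). nra.
    + assert (U : (cnt (eqc p0 alpha) P * cnt (eqc p0 beta) P +
         sumf (fun p => (cnt (eqc p alpha) P * cnt (eqc p beta) P)%nat) (Q ++ Rl)
         <= 4 * n * n)%nat).
      { pose proof (cnt_le (eqc p0 alpha) P). pose proof (cnt_le (eqc p0 beta) P).
        assert (S : (sumf (fun p => (cnt (eqc p alpha) P * cnt (eqc p beta) P)%nat) (Q ++ Rl)
           <= length (Q ++ Rl) * (3 * n))%nat).
        { apply sumf_le. intros p Hp.
          assert (Hpne : fst p <> snd p).
          { apply in_app_or in Hp as [H1|H1].
            - apply inQ in H1 as [i [Hi ->]]. specialize (fa_rng i Hi). unfold lpt; simpl; lra.
            - apply inR in H1 as [i [Hi ->]]. specialize (fb_rng i Hi). unfold lpt; simpl; lra. }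
          assert (C3 : (cnt (eqc p alpha) P <= 3)%nat).
          { unfold P. change (cnt (eqc p alpha) (p0 :: Q ++ Rl)) with
              (cnt (eqc p alpha) ([p0] ++ (Q ++ Rl))). rewrite !cnt_app.
            pose proof (line_uniq p alpha alpha fa m Hpne fa_inj) as U1.
            pose proof (line_uniq p beta alpha fb k Hpne fb_inj) as U2.
            pose proof (cnt_le (eqc p alpha) [p0]) as U3. fold Q in U1. fold Rl in U2.
            simpl in U3. lia. }
          pose proof (cnt_le (eqc p beta) P).
          pose proof (Nat.mul_le_mono _ _ _ _ C3 H1). lia. }
        assert (length (Q ++ Rl) <= n)%nat by (rewrite <- LP; unfold P; simpl; lia).
        rewrite LP in H, H0.
        pose proof (Nat.mul_le_mono _ _ _ _ H H0).
        pose proof (Nat.mul_le_mono_r _ _ (3*n) H1). lia. }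
      apply le_INR in U. rewrite !mult_INR in U. simpl in U. nra.
Qed.
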